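(* Let $G$ be a bipartite graph with parts $X$ and $Y$ such that every vertex in $Y$ has degree at least $(|X|+|Y|)/2$. Then $G$ contains a path covering $2|Y|$ vertices. *)

(* Defs.v *)
From mathcomp Require Import all_boot.
Set Implicit Arguments. Unset Strict Implicit. Unset Printing Implicit Defensive.

Definition simple_graph (T : finType) (e : rel T) : Prop :=
  symmetric e /\ irreflexive e.

Definition bipartite_with_parts (T : finType) (e : rel T) (X Y : {set T}) : Prop :=
  [/\ X :|: Y = setT, [disjoint X & Y] &
      forall u v, e u v -> (u \in X) && (v \in Y) || (u \in Y) && (v \in X)].

Definition deg (T : finType) (e : rel T) (v : T) : nat := #|[set w | e v w]|.

Definition is_gpath (T : finType) (e : rel T) (p : seq T) : bool :=
  uniq p && (if p is x :: q then path e x q else true).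

(* Main.v *)
Require Import Defs.
From mathcomp Require Import all_boot.
From mathcomp Require Import zify.

Lemma nbr_in_X (T : finType) (e : rel T) (X Y : {set T}) y w :
  bipartite_with_parts e X Y -> y \in Y -> e y w -> w \in X.
Proof.
case=> _ hdis hb hy hyw.
have := hb _ _ hyw; rewrite hy /=.
case/orP => [/andP [hx _] | //].
by move: (disjointFr hdis hx); rewrite hy.
Qed.

Lemma key (T : finType) (e : rel T) (X Y : {set T}) :
  simple_graph e ->
  bipartite_with_parts e X Y ->
  (forall y, y \in Y -> #|X| + #|Y| <= 2 * deg e y) ->
  forall ys y, uniq (y :: ys) -> {subset y :: ys <= Y} -> size (y :: ys) <= #|Y| ->
  exists q xs, [/\ is_gpath e (y :: q), size (y :: q) = 2 * size (y :: ys),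
     size xs = size (y :: ys), uniq xs & {subset xs <= X} /\ {subset y :: q <= y :: ys ++ xs}].
Proof.
move=> [esym eirr] hb hd.
have hdis : [disjoint X & Y] by case: hb.
have degX : forall y, y \in Y -> deg e y <= #|X|.
  move=> y hy; rewrite /deg; apply: subset_leq_card; apply/subsetP => w.
  by rewrite inE; apply: nbr_in_X hb hy.
elim=> [|y1 ys IH] y.
- move=> _ hsub _.
  have hy : y \in Y by apply: hsub; rewrite inE.
  have hY : 0 < #|Y| by apply/card_gt0P; exists y.
  have := hd y hy; have := degX y hy => h1 h2.
  have : 0 < #|[set w | e y w]| by rewrite /deg in h1 h2; lia.
  case/card_gt0P => x; rewrite inE => hx.
  have xX : x \in X by apply: nbr_in_X hb hy hx.
  exists [:: x], [:: x]; split => //.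
  + rewrite /is_gpath; apply/andP; split; last by rewrite /= hx.
    rewrite /= inE !andbT.
    by apply/eqP => Exy; move: (disjointFr hdis xX); rewrite -Exy hy.
  + split; first by move=> z; rewrite inE => /eqP ->.
    by move=> z; rewrite !inE.
- move=> hu hsub hsz.
  have hy : y \in Y by apply: hsub; rewrite inE eqxx.
  have hy1 : y1 \in Y by apply: hsub; rewrite !inE eqxx orbT.
  move: hu => /= /andP [hny /andP [hny1 hu]].
  have [q [xs [hp hsq hsx hux [hxX hqsub]]]] :
      exists q xs, [/\ is_gpath e (y1 :: q), size (y1 :: q) = 2 * size (y1 :: ys),
     size xs = size (y1 :: ys), uniq xs & {subset xs <= X} /\ {subset y1 :: q <= y1 :: ys ++ xs}].
    apply: IH.
    + by rewrite /= hny1 hu.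
    + by move=> z hz; apply: hsub; rewrite inE hz orbT.
    + move: hsz => /=; lia.
  set A := [set w | e y w]; set B := [set w | e y1 w].
  have hAB : #|A :|: B| <= #|X|.
    apply: subset_leq_card; apply/subsetP => w; rewrite !inE.
    by case/orP => h; [apply: nbr_in_X hb hy h | apply: nbr_in_X hb hy1 h].
  have hcap : #|Y| <= #|A :&: B|.
    have := cardsUI A B; have := hd y hy; have := hd y1 hy1.
    rewrite /deg -/A -/B. lia.
  have hxs : #|[set z in xs]| = size xs by rewrite cardsE; apply/card_uniqP.
  have hI : #|(A :&: B) :&: [set z in xs]| <= size xs.
    by rewrite -hxs; apply: subset_leq_card; apply: subsetIr.
  have : 0 < #|(A :&: B) :\: [set z in xs]|.
    rewrite cardsD; move: hsz hsx hcap hI => /=; lia.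
  case/card_gt0P => x; rewrite !inE => /andP [hnx /andP [hyx hy1x]].
  have xX : x \in X by apply: nbr_in_X hb hy hyx.
  have xnY : x \notin Y by rewrite (disjointFr hdis xX).
  have ynX : y \notin X.
    apply/negP => yX; move: (disjointFr hdis yX); by rewrite hy.
  exists (x :: y1 :: q), (x :: xs); split.
  + move: hp; rewrite /is_gpath /= => /andP [hup hpa].
    rewrite hpa hyx (esym x y1) hy1x !andbT.
    have hnq : forall z, z \in y1 :: q -> z != x /\ z != y.
      move=> z /hqsub; rewrite inE mem_cat => /orP [/eqP -> | /orP [hz | hz]].
      * split; apply/eqP => E.
        -- by move: xnY; rewrite -E hy1.
        -- by move: hny; rewrite E inE eqxx.
      * split; apply/eqP => E.
        -- by move: xnY; rewrite -E hsub // !inE hz !orbT.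
        -- by move: hny; rewrite -E inE hz orbT.
      * split; apply/eqP => E.
        -- by move: hnx; rewrite -E hz.
        -- by move: ynX; rewrite -E hxX.
    move: hup => /= /andP [h1 h2]; rewrite h1 h2 /= !andbT.
    apply/andP; split.
    * rewrite in_cons negb_or; apply/andP; split.
      -- by apply/eqP => E; move: xnY; rewrite -E hy.
      -- by apply/negP => /hnq [] _; rewrite eqxx.
    * by apply/negP => /hnq []; rewrite eqxx.
  + move: hsq => /= hsq. move: hsq; clear; lia.
  + by move: hsx => /= ->.
  + by rewrite /= hnx hux.
  + split.
    * by move=> z; rewrite inE => /orP [/eqP -> | /hxX].
    * move=> z; rewrite in_cons => /orP [/eqP -> | ]; first by rewrite mem_head.
      rewrite in_cons => /orP [/eqP -> | hz]; first by rewrite !inE mem_cat inE eqxx !orbT.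
      move: (hqsub z hz); rewrite !inE !mem_cat !inE.
      by case/orP => [->|/orP [->|->]]; rewrite ?orbT.
Qed.

Theorem lemma2p2 (T : finType) (e : rel T) (X Y : {set T}) :
  simple_graph e ->
  bipartite_with_parts e X Y ->
  (forall y, y \in Y -> #|X| + #|Y| <= 2 * deg e y) ->
  exists p : seq T, is_gpath e p /\ size p = 2 * #|Y|.
Proof.
move=> hs hb hd.
case E: (enum Y) => [|y ys].
- exists [::]; split => //.
  by rewrite cardE E.
- have hu : uniq (y :: ys) by rewrite -E enum_uniq.
  have hsub : {subset y :: ys <= Y} by move=> z; rewrite -E mem_enum.
  have hsz : size (y :: ys) = #|Y| by rewrite -E cardE.
  have [q [xs [hp hsq _ _ _]]] := @key T e X Y hs hb hd ys y hu hsub (eq_leq hsz).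
  by exists (y :: q); split => //; rewrite hsq hsz.
Qed.
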